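(* Let $p$ be an odd prime, let $n\ge 1$ and $0\le k\le n$, and let $\mathcal S\subseteq \mathbb Z_p^{2n}$ be an isotropic subspace of dimension $n-k$. Let $\hat\rho$ be any single-qudit density matrix on $\mathbb C^p$. Then the probability of successfully projecting $\hat\rho^{\otimes n}$ onto the trivial-syndrome codespace of $\mathcal S$ equals the complete weight enumerator of $\mathcal S^\perp$ evaluated at the entries of the Wigner function of $\hat\rho$: $$\operatorname{tr}\!\left(\hat\Pi^0_{\mathcal S}\,\hat\rho^{\otimes n}\right)=w\big(\mathcal S^\perp;\{W(\hat\rho;i,j)\}\big)=\sum_{(\vec u|\vec v)\in\mathcal S^\perp}\ \prod_{i=1}^n W(\hat\rho;u_i,v_i).$$
   Context: Let $p$ be an odd prime, $\omega=e^{2\pi i/p}$, and $2^{-1}$ the inverse of $2$ in $\mathbb Z_p$. On $\mathbb C^p$ with basis $\{|k\rangle\}_{k\in\mathbb Z_p}$ let $\hat X=\sum_k|k+1\rangle\langle k|$, $\hat Z=\sum_k\omega^k|k\rangle\langle k|$, and $\hat D(u,v)=\omega^{-2^{-1}uv}\hat X^u\hat Z^v$ for $u,v\in\mathbb Z_p$. For $\chi=(\vec u|\vec v)\in\mathbb Z_p^{2n}$ (with $\vec u,\vec v\in\mathbb Z_p^n$) let $\hat D(\chi)=\hat D(u_1,v_1)\otimes\cdots\otimes\hat D(u_n,v_n)$. The symplectic form is $[\chi,\chi']=\vec u\cdot\vec v'-\vec u'\cdot\vec v$. A subspace $\mathcal S\subseteq\mathbb Z_p^{2n}$ is isotropic if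 $[\chi,\chi']=0$ for all $\chi,\chi'\in\mathcal S$; it is identified with the stabilizer group $\{\hat D(\chi):\chi\in\mathcal S\}$. Define $\mathcal S^\perp=\{\chi\in\mathbb Z_p^{2n}:[\chi,\sigma]=0\ \forall\sigma\in\mathcal S\}$, and the trivial-syndrome projector $\hat\Pi^0_{\mathcal S}=p^{-(n-k)}\sum_{\chi\in\mathcal S}\hat D(\chi)$. Phase point operators: $\hat A(0,0)=p^{-1}\sum_{u,v\in\mathbb Z_p}\hat D(u,v)$, $\hat A(u,v)=\hat D(u,v)\hat A(0,0)\hat D(u,v)^\dagger$. The discrete Wigner function of a single-qudit state is $W(\hat\rho;u,v)=p^{-1}\operatorname{tr}(\hat\rho\hat A(u,v))$. For a subset $T\subseteq\mathbb Z_p^{2n}$ and numbers $\{y_{ij}\}_{i,j\in\mathbb Z_p}$, the complete weight enumerator is $w(T;\{y_{ij}\})=\sum_{(\vec u|\vec v)\in T}\prod_{i=1}^n y_{u_i,v_i}$. *)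

(* Defs.v *)
From HB Require Import structures.
From mathcomp Require Import all_boot all_order all_algebra.
From mathcomp Require Import reals trigo.
From mathcomp Require Import complex.
Set Implicit Arguments. Unset Strict Implicit. Unset Printing Implicit Defensive.
Import Order.TTheory GRing.Theory Num.Theory.
Local Open Scope ring_scope.

Section Qudits.
Variables (R : realType) (p : nat).

Local Notation C := (R[i]).
Local Notation Fp := ('F_p).

Definition omega : C := Complex (cos (2 * pi / p%:R)) (sin (2 * pi / p%:R)).

(* omega^m for m in Z_p (well defined since omega^p = 1) *)
Definition omegaZ (m : Fp) : C := omega ^+ (val m).

(* linear operators on C^T, for a finite basis type T, as matrices T x T *)
Definition op (T : finType) := T -> T -> C.
Definition opmul (T : finType) (A B : op T) : op T :=
  fun x y => \sum_(z : T) A x z * B z y.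
Definition opid (T : finType) : op T := fun x y => (x == y)%:R.
Definition opexp (T : finType) (A : op T) (m : nat) : op T :=
  iter m (opmul A) (@opid T).
Definition opadj (T : finType) (A : op T) : op T := fun x y => (A y x)^*.
Definition optr (T : finType) (A : op T) : C := \sum_(x : T) A x x.

(* single-qudit operators on C^p, basis {|k> : k in Z_p} *)
Definition Xop : op Fp := fun a b => (a == b + 1)%:R.
Definition Zop : op Fp := fun a b => (a == b)%:R * omegaZ b.
Definition Dop (u v : Fp) : op Fp :=
  fun a b => omegaZ (- ((2%:R)^-1 * u * v)) * opmul (opexp Xop (val u)) (opexp Zop (val v)) a b.

Definition A00 : op Fp := fun a b => (p%:R)^-1 * \sum_(u : Fp) \sum_(v : Fp) Dop u v a b.
Definition Aop (u v : Fp) : op Fp := opmul (opmul (Dop u v) A00) (opadj (Dop u v)).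

Definition Wigner (rho : op Fp) (u v : Fp) : C := (p%:R)^-1 * optr (opmul rho (Aop u v)).

Definition density (rho : op Fp) : Prop :=
  (forall a b, rho a b = (rho b a)^*) /\
  (forall psi : Fp -> C, 0 <= \sum_(a : Fp) \sum_(b : Fp) (psi a)^* * rho a b * psi b) /\
  optr rho = 1.

Section NQudits.
Variable n : nat.

Definition basis := {ffun 'I_n -> Fp}.

Definition tens (F : 'I_n -> op Fp) : op basis :=
  fun x y => \prod_(i < n) F i (x i) (y i).

Definition tensn (A : op Fp) : op basis := tens (fun _ => A).

Definition symv := 'rV[Fp]_(n + n).
Definition uvec (chi : symv) : 'rV[Fp]_n := lsubmx chi.
Definition vvec (chi : symv) : 'rV[Fp]_n := rsubmx chi.

Definition sympl (chi chi' : symv) : Fp :=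
  \sum_(i < n) (uvec chi 0 i * vvec chi' 0 i - uvec chi' 0 i * vvec chi 0 i).

Definition isotropic (S : {vspace symv}) : Prop :=
  forall chi chi', chi \in S -> chi' \in S -> sympl chi chi' = 0.

Definition sperp (S : {vspace symv}) : {set symv} :=
  [set chi : symv | [forall sigma : symv, (sigma \in S) ==> (sympl chi sigma == 0)]].

Definition Dn (chi : symv) : op basis :=
  tens (fun i => Dop (uvec chi 0 i) (vvec chi 0 i)).

(* trivial-syndrome projector, with |S| = p^(n-k) *)
Definition Pi0 (k : nat) (S : {vspace symv}) : op basis :=
  fun x y => (p%:R ^- (n - k)) * \sum_(chi : symv | chi \in S) Dn chi x y.

Definition cwe (T : {set symv}) (y : Fp -> Fp -> C) : C :=
  \sum_(chi in T) \prod_(i < n) y (uvec chi 0 i) (vvec chi 0 i).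

End NQudits.
End Qudits.

(* Main.v *)
Require Import Defs.
From HB Require Import structures.
From mathcomp Require Import all_boot all_order all_algebra all_field.
From mathcomp Require Import reals trigo.
From mathcomp Require Import complex.
From mathcomp Require Import ring lra.
Set Implicit Arguments. Unset Strict Implicit. Unset Printing Implicit Defensive.
Import Order.TTheory GRing.Theory Num.Theory.
Local Open Scope ring_scope.

Lemma sum_shift0 (C : comUnitRingType) (T : finType) (P : pred T) (F : T -> C) (h : T -> T) (c : C) :
  injective h -> (forall x, P (h x) = P x) -> (forall x, F (h x) = c * F x) -> (1 - c) \is a GRing.unit ->
  \sum_(x | P x) F x = 0.
Proof.
move=> hi hP hF cu.
have E : \sum_(x | P x) F x = c * \sum_(x | P x) F x.
  rewrite {1}(reindex_inj hi) /= mulr_sumr; apply: eq_big => [y|y _]; [by rewrite hP | by rewrite hF].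
have : (1 - c) * \sum_(x | P x) F x = 0 by rewrite mulrBl mul1r -E subrr.
by move/(congr1 (fun y => (1 - c)^-1 * y)); rewrite mulrA mulVr // mul1r mulr0.
Qed.

Lemma sum_delta (C : pzRingType) (T : finType) (t0 : T) (F : T -> C) :
  \sum_(z : T) (z == t0)%:R * F z = F t0.
Proof.
rewrite (bigD1 t0) //= eqxx mul1r big1 ?addr0 // => z /negbTE ->.
by rewrite mul0r.
Qed.

Lemma eq_shift (V : zmodType) (a z u : V) : (a == z + u) = (z == a - u).
Proof. by apply/eqP/eqP => ->; rewrite ?addrK ?subrK. Qed.

Section Om.
Variables (R : realType) (p : nat).
Hypotheses (pr : prime p) (podd : odd p).
Local Notation th := (2 * pi / p%:R : R).
Local Notation w := (omega R p).

Lemma mulC_cplx (a b c d : R) : (Complex a b) * (Complex c d) = Complex (a*c - b*d) (a*d + b*c) :> R[i].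
Proof. by []. Qed.

Lemma omegaX m : w ^+ m = Complex (cos (m%:R * th)) (sin (m%:R * th)).
Proof.
elim: m => [|m IH]; first by rewrite expr0 !mul0r cos0 sin0.
rewrite exprSr IH /omega mulC_cplx.
set t := (_ / _ : R).
rewrite -[m.+1]addn1 natrD mulrDl mul1r cosD sinD.
congr Complex; ring.
Qed.

Lemma p_gt2 : (2 < p)%N.
Proof.
have := prime_gt1 pr; rewrite leq_eqVlt => /orP[/eqP E|//].
by move: podd; rewrite -E.
Qed.

Lemma pR_neq0 : (p%:R : R) != 0.
Proof. by rewrite pnatr_eq0 -lt0n (ltn_trans _ p_gt2). Qed.

Lemma omega_p : w ^+ p = 1.
Proof.
rewrite omegaX mulrC divfK ?pR_neq0 // mulr_natl cos2pi sin2pi.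
by [].
Qed.

Lemma omega_neq1 : w != 1.
Proof.
rewrite /omega; apply/negP; rewrite eq_complex /= => /andP[_].
rewrite gt_eqF //; apply: sin_gt0_pi; apply/andP; split.
  by rewrite divr_gt0 ?mulr_gt0 ?pi_gt0 // ltr0n (ltn_trans _ p_gt2).
rewrite ltr_pdivrMr ?ltr0n ?(ltn_trans _ p_gt2) //.
rewrite mulrC ltr_pM2l ?pi_gt0 // ltr_nat; exact: p_gt2.
Qed.

Lemma omega_conj : w * w^* = 1.
Proof.
rewrite /omega.
have -> : (Complex (cos th) (sin th))^* = Complex (cos th) (- sin th) by [].
rewrite mulC_cplx; apply/eqP; rewrite eq_complex /=; apply/andP; split; apply/eqP.
  by rewrite mulrN opprK -!expr2 cos2Dsin2.
by rewrite mulrN addrC mulrC subrr.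
Qed.

Local Notation e := (@omegaZ R p).

Lemma eN m : e (m%:R) = w ^+ m.
Proof. by rewrite /omegaZ -[val _]/(nat_of_ord _) val_Fp_nat // (expr_mod _ omega_p). Qed.

Lemma eD x y : e (x + y) = e x * e y.
Proof.
have := eN (val x + val y); rewrite natrD !natr_Zp => ->.
by rewrite exprD.
Qed.

Lemma e0 : e 0 = 1.
Proof. by rewrite /omegaZ expr0. Qed.

Lemma eNe x : e (- x) * e x = 1.
Proof. by rewrite -eD addNr e0. Qed.

Lemma e_neq0 x : e x != 0.
Proof. by apply/negP => /eqP E; have := eNe x; rewrite E mulr0 => /eqP; rewrite eq_sym oner_eq0. Qed.

Lemma e_conj x : (e x)^* = e (- x).
Proof.
have H : e x * (e x)^* = 1.
  by rewrite /omegaZ rmorphXn /= -exprMn omega_conj expr1n.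
apply: (mulfI (e_neq0 x)); rewrite H mulrC eNe //.
Qed.

Lemma eX x m : e x ^+ m = e (m%:R * x).
Proof.
elim: m => [|m IH]; first by rewrite expr0 mul0r e0.
by rewrite exprS IH -eD -[m.+1]addn1 natrD mulrDl mul1r addrC.
Qed.

Lemma e1 : e 1 != 1.
Proof. by rewrite -[1]/(1%:R) eN // expr1 omega_neq1. Qed.

Lemma e_neq1 x : x != 0 -> e x != 1.
Proof.
move=> x0; apply/negP => /eqP E.
have := eX x (val x^-1); rewrite natr_Zp mulVf // E expr1n => /esym/eqP.
by rewrite (negbTE e1).
Qed.

Lemma unit_1e x : x != 0 -> (1 - e x) \is a GRing.unit.
Proof. by move=> x0; rewrite unitfE subr_eq0 eq_sym e_neq1. Qed.

Lemma sum_e (a : 'F_p) : \sum_(x : 'F_p) e (a * x) = if a == 0 then p%:R else 0.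
Proof.
case: eqP => [->|/eqP a0].
  under eq_bigr do rewrite mul0r e0.
  by rewrite sumr_const card_Fp.
apply: (@sum_shift0 _ _ _ _ (fun x => x + 1) (e a)) => //.
- exact: addIr.
- by move=> x; rewrite mulrDr mulr1 eD mulrC.
- exact: unit_1e.
Qed.

Lemma valR (x : 'F_p) : (val x)%:R = x.
Proof. exact: natr_Zp. Qed.
Local Notation C := (R[i]).
Local Notation Fp := ('F_p).
Local Notation h := ((2%:R : Fp)^-1).

Lemma opexpX m (a b : Fp) : opexp (@Xop R p) m a b = (a == b + m%:R)%:R.
Proof.
elim: m a b => [|m IH] a b; first by rewrite /opexp /= /opid addr0.
rewrite /opexp iterS -/(opexp _ m) /opmul.
under eq_bigr do rewrite /Xop eq_shift IH.
rewrite sum_delta; congr (_%:R).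
rewrite -natr1 addrA. by rewrite (eq_shift a) eq_sym.
Qed.

Lemma opexpZ m (a b : Fp) : opexp (@Zop R p) m a b = (a == b)%:R * e b ^+ m.
Proof.
elim: m a b => [|m IH] a b; first by rewrite /opexp /= /opid expr0 mulr1.
rewrite /opexp iterS -/(opexp _ m) /opmul.
under eq_bigr do rewrite /Zop IH eq_sym -mulrA.
rewrite sum_delta exprS.
by case: eqP => [->|_]; rewrite ?mul0r ?mulr0 // !mul1r.
Qed.

Lemma DopE (u v a b : Fp) : Dop R u v a b = e (- (h * u * v)) * (a == b + u)%:R * e (v * b).
Proof.
rewrite /Dop /opmul -[RHS]mulrA; congr (_ * _).
under eq_bigr do rewrite opexpX opexpZ natr_Zp eq_shift.
rewrite sum_delta.
by rewrite eX valR (eq_shift a) eq_sym.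
Qed.

Lemma pC_neq0 : (p%:R : C) != 0.
Proof. by rewrite pnatr_eq0 -lt0n (ltn_trans _ p_gt2). Qed.

Lemma indT : (true%:R : C) = 1. Proof. by []. Qed.
Lemma indF : (false%:R : C) = 0. Proof. by []. Qed.

Lemma ind_mul (b1 b2 : bool) : (b1%:R : C) * b2%:R = (b1 && b2)%:R.
Proof. by case: b1; case: b2; rewrite ?mul0r ?mul1r. Qed.

Lemma A00E (a b : Fp) : @A00 R p a b = (b - h * (a - b) == 0)%:R.
Proof.
rewrite /A00.
have -> : \sum_u \sum_v Dop R u v a b = \sum_(v : Fp) e ((b - h * (a - b)) * v).
  rewrite (eq_bigr (fun u => (u == a - b)%:R * \sum_(v : Fp) e ((b - h * (a - b)) * v))).
    by rewrite (sum_delta (a - b) (fun _ => \sum_(v : Fp) e ((b - h * (a - b)) * v))).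
  move=> u _; rewrite mulr_sumr; apply: eq_bigr => v _.
  rewrite DopE (addrC b u) (eq_shift a).
  case: eqP => [->|_]; last by rewrite indF !(mulr0, mul0r).
  by rewrite indT mulr1 mul1r -[LHS]eD; congr e; ring.
transitivity ((p%:R : C)^-1 * (if (b - h * (a - b)) == 0 then (p%:R : C) else 0)).
  congr (_ * _); exact: sum_e.
case: eqP => _; last by rewrite mulr0.
by rewrite mulVf // pC_neq0.
Qed.

Lemma AopE (u v a b : Fp) :
  Aop R u v a b = e (v * (a - b)) * ((b - u) - h * ((a - u) - (b - u)) == 0)%:R.
Proof.
rewrite /Aop /opmul /opadj.
have E1 y : \sum_z Dop R u v a z * @A00 R p z y = e (- (h * u * v)) * e (v * (a - u)) * @A00 R p (a - u) y.
  rewrite (eq_bigr (fun z => (z == a - u)%:R * (e (- (h * u * v)) * e (v * z) * @A00 R p z y))).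
    by rewrite (sum_delta (a - u) (fun z => e (- (h * u * v)) * e (v * z) * @A00 R p z y)).
  move=> z _; rewrite DopE (eq_shift a).
  case: eqP => _; first by rewrite indT; ring.
  by rewrite indF; ring.
under eq_bigr do rewrite E1.
rewrite (eq_bigr (fun y => (y == b - u)%:R * (e (- (h * u * v)) * e (v * (a - u)) * @A00 R p (a - u) y *
     (e (- (h * u * v)) * e (v * y))^*))).
  rewrite (sum_delta (b - u) (fun y => e (- (h * u * v)) * e (v * (a - u)) * @A00 R p (a - u) y *
     (e (- (h * u * v)) * e (v * y))^*)).
  rewrite A00E rmorphM /= !e_conj.
  have key : e (- (h * u * v)) * e (v * (a - u)) * e (- - (h * u * v)) * e (- (v * (b - u))) = e (v * (a - b)).
    by rewrite -!eD; congr e; ring.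
  rewrite -key; ring.
move=> y _; rewrite DopE (eq_shift b) !rmorphM rmorph_nat /=.
by case: eqP => _; [rewrite indT | rewrite indF]; ring.
Qed.

Lemma exch4 (F : Fp -> Fp -> Fp -> Fp -> C) :
  \sum_(u : Fp) \sum_(v : Fp) \sum_(x : Fp) \sum_(y : Fp) F u v x y =
  \sum_(x : Fp) \sum_(y : Fp) \sum_(u : Fp) \sum_(v : Fp) F u v x y.
Proof.
under eq_bigr => u _ do rewrite exchange_big.
under eq_bigr => u _ do under eq_bigr => x _ do rewrite exchange_big.
rewrite exchange_big.
by under eq_bigr => x _ do rewrite exchange_big.
Qed.

Lemma condE (x y u : Fp) : ((x - u) - h * ((y - u) - (x - u)) == 0) = (u == x - h * (y - x)).
Proof.
apply/eqP/eqP => H.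
  have -> : u = x - h * (y - x) - ((x - u) - h * ((y - u) - (x - u))) by ring.
  by rewrite H subr0.
by rewrite H; ring.
Qed.

Definition tr1 (rho : op R Fp) (c1 c2 : Fp) : C :=
  \sum_(a : Fp) \sum_(b : Fp) Dop R c1 c2 a b * rho b a.

Lemma tr1E rho c1 c2 : tr1 rho c1 c2 = \sum_(x : Fp) e (c2 * (x - h * c1)) * rho x (x + c1).
Proof.
rewrite /tr1 exchange_big /=; apply: eq_bigr => b _.
rewrite (eq_bigr (fun a => (a == b + c1)%:R * (e (- (h * c1 * c2)) * e (c2 * b) * rho b a))).
  rewrite (sum_delta (b + c1) (fun a => e (- (h * c1 * c2)) * e (c2 * b) * rho b a)).
  by rewrite -eD; congr (e _ * _); ring.
move=> a _; rewrite DopE; ring.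
Qed.

Lemma fourier rho c1 c2 :
  tr1 rho c1 c2 = \sum_(u : Fp) \sum_(v : Fp) Wigner rho u v * e (c2 * u - c1 * v).
Proof.
rewrite tr1E.
have E1 : \sum_(u : Fp) \sum_(v : Fp) Wigner rho u v * e (c2 * u - c1 * v) =
  (p%:R : C)^-1 * \sum_(u : Fp) \sum_(v : Fp) \sum_(x : Fp) \sum_(y : Fp)
     (rho x y * e (v * (y - x)) * (u == x - h * (y - x))%:R * e (c2 * u - c1 * v)).
  rewrite mulr_sumr; apply: eq_bigr => u _; rewrite mulr_sumr; apply: eq_bigr => v _.
  rewrite /Wigner /optr /opmul -mulrA; congr (_ * _).
  rewrite mulr_suml; apply: eq_bigr => x _; rewrite mulr_suml; apply: eq_bigr => y _.
  by rewrite AopE condE; ring.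
rewrite E1 exch4.
have E2 x y : \sum_(u : Fp) \sum_(v : Fp)
     (rho x y * e (v * (y - x)) * (u == x - h * (y - x))%:R * e (c2 * u - c1 * v)) =
   (y == x + c1)%:R * (p%:R * (rho x y * e (c2 * (x - h * (y - x))))).
  rewrite (eq_bigr (fun u => (u == x - h * (y - x))%:R *
      (rho x y * e (c2 * u) * \sum_(v : Fp) e ((y - x - c1) * v)))).
    rewrite (sum_delta (x - h * (y - x)) (fun u => rho x y * e (c2 * u) * \sum_(v : Fp) e ((y - x - c1) * v))).
    transitivity (rho x y * e (c2 * (x - h * (y - x))) * (if y - x - c1 == 0 then (p%:R : C) else 0)).
      by congr (_ * _); exact: sum_e.
    have -> : (y - x - c1 == 0) = (y == x + c1) by rewrite subr_eq0 subr_eq addrC.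
    by case: eqP => _; [rewrite indT | rewrite indF]; ring.
  move=> u _; rewrite mulr_sumr mulr_sumr; apply: eq_bigr => v _.
  have E : e (v * (y - x)) * e (c2 * u - c1 * v) = e (c2 * u) * e ((y - x - c1) * v).
    by rewrite -!eD; congr e; ring.
  transitivity ((u == x - h * (y - x))%:R * (rho x y * (e (v * (y - x)) * e (c2 * u - c1 * v)))).
    ring.
  rewrite E; ring.
rewrite [in RHS](eq_bigr (fun x => \sum_(y : Fp) (y == x + c1)%:R * (p%:R * (rho x y * e (c2 * (x - h * (y - x)))))));
  last by move=> x _; apply: eq_bigr => y _; exact: E2.
rewrite mulr_sumr; apply: eq_bigr => x _.
rewrite (sum_delta (x + c1) (fun y => p%:R * (rho x y * e (c2 * (x - h * (y - x)))))).
rewrite [RHS]mulrA mulVf ?pC_neq0 // mul1r mulrC; congr (_ * _); congr e; ring.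
Qed.

Lemma sum_prod2 (I J : finType) (G : I -> J -> J -> C) :
  \sum_(x : {ffun I -> J}) \sum_(z : {ffun I -> J}) \prod_i G i (x i) (z i) =
  \prod_i \sum_(a : J) \sum_(b : J) G i a b.
Proof.
rewrite (eq_bigr (fun x : {ffun I -> J} => \prod_i \sum_(b : J) G i (x i) b)); last first.
  by move=> x _; rewrite bigA_distr_bigA.
by rewrite -(bigA_distr_bigA (fun i a => \sum_(b : J) G i a b)).
Qed.

Lemma e_sum (I : finType) (F : I -> Fp) : e (\sum_i F i) = \prod_i e (F i).
Proof. by apply: (big_morph _ eD e0). Qed.

Variable n : nat.

Lemma step1 (k : nat) (S : {vspace symv p n}) (rho : op R Fp) :
  optr (opmul (@Pi0 R p n k S) (@tensn R p n rho)) =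
  (p%:R ^- (n - k)) * \sum_(chi : symv p n | chi \in S)
     \prod_(i < n) tr1 rho (uvec chi 0 i) (vvec chi 0 i).
Proof.
rewrite /optr /opmul /Pi0 /tensn /tens /Dn.
under eq_bigr => x _ do under eq_bigr => z _ do rewrite -mulrA mulr_suml.
under eq_bigr => x _ do rewrite -mulr_sumr.
rewrite -mulr_sumr; congr (_ * _).
under eq_bigr => x _ do rewrite exchange_big /=.
rewrite exchange_big /=; apply: eq_bigr => chi _.
under eq_bigr => x _ do under eq_bigr => z _ do rewrite -big_split /=.
rewrite (sum_prod2 (fun i a b => Dop R (uvec chi 0 i) (vvec chi 0 i) a b * rho b a)).
by [].
Qed.

Definition Fv (f : {ffun 'I_n -> Fp * Fp}) : symv p n :=
  row_mx (\row_i (f i).1) (\row_i (f i).2).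

Lemma uvecF f i : uvec (Fv f) 0 i = (f i).1.
Proof. by rewrite /uvec /Fv row_mxKl mxE. Qed.

Lemma vvecF f i : vvec (Fv f) 0 i = (f i).2.
Proof. by rewrite /vvec /Fv row_mxKr mxE. Qed.

Lemma step2 (chi : symv p n) rho :
  \prod_(i < n) tr1 rho (uvec chi 0 i) (vvec chi 0 i) =
  \sum_(f : {ffun 'I_n -> Fp * Fp}) (\prod_(i < n) Wigner rho (f i).1 (f i).2) * e (sympl (Fv f) chi).
Proof.
under eq_bigr => i _ do rewrite fourier pair_bigA /=.
rewrite bigA_distr_bigA /=; apply: eq_bigr => f _.
rewrite big_split /=; congr (_ * _).
rewrite /sympl e_sum; apply: eq_bigr => i _; rewrite uvecF vvecF; congr e; ring.
Qed.

Lemma symplD (a x y : symv p n) : sympl a (x + y) = sympl a x + sympl a y :> Fp.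
Proof.
rewrite /sympl /uvec /vvec -big_split; apply: eq_bigr => i _.
rewrite !linearD !mxE /=; ring.
Qed.

Lemma char_S (S : {vspace symv p n}) a :
  \sum_(chi : symv p n | chi \in S) e (sympl a chi) =
  if a \in sperp S then (p ^ \dim S)%:R else 0.
Proof.
case: ifP => Ha.
  have H0 chi : chi \in S -> sympl a chi = 0.
    move: Ha; rewrite inE => /forallP H Hc; apply/eqP; exact: (implyP (H chi) Hc).
  rewrite (eq_bigr (fun=> 1)); last by move=> chi Hc; rewrite H0 // e0.
  by rewrite sumr_const card_vspace card_Fp.
move: Ha; rewrite inE => /negbT /forallPn [sg]; rewrite negb_imply => /andP[Hs Hne].
apply: (@sum_shift0 _ _ _ _ (fun chi => chi + sg) (e (sympl a sg))).
- exact: addIr.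
- move=> chi; apply/idP/idP => H; last exact: memvD.
  by have := memvB H Hs; rewrite addrK.
- by move=> chi; rewrite symplD eD mulrC.
- exact: unit_1e.
Qed.

Definition Finv (chi : symv p n) : {ffun 'I_n -> Fp * Fp} :=
  [ffun i => (uvec chi 0 i, vvec chi 0 i)].

Lemma bijFv : bijective Fv.
Proof.
exists Finv.
  by move=> f; apply/ffunP => i; rewrite ffunE uvecF vvecF; case: (f i).
move=> chi; rewrite /Fv -[RHS](hsubmxK chi); congr row_mx; apply/rowP => i.
  by rewrite mxE ffunE.
by rewrite mxE ffunE.
Qed.

Lemma main (k : nat) (S : {vspace symv p n}) (rho : op R Fp) :
  \dim S = (n - k)%N ->
  optr (opmul (@Pi0 R p n k S) (@tensn R p n rho)) = cwe (sperp S) (Wigner rho).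
Proof.
move=> dS.
rewrite step1.
under eq_bigr => chi _ do rewrite step2.
rewrite exchange_big /=.
under eq_bigr => f _ do rewrite -mulr_sumr char_S dS.
rewrite /cwe (reindex Fv); last exact: onW_bij bijFv.
rewrite mulr_sumr [in RHS]big_mkcond /=; apply: eq_bigr => f _.
case: ifP => _; last by rewrite mulr0 mulr0.
rewrite natrX mulrCA mulVf ?expf_neq0 ?pC_neq0 // mulr1.
by apply: eq_bigr => i _; rewrite uvecF vvecF.
Qed.
End Om.

Unset Implicit Arguments.
Theorem theorem1 (R : realType) (p : nat) (n k : nat)
    (S : {vspace symv p n}) (rho : op R 'F_p) :
  prime p -> odd p -> (1 <= n)%N -> (k <= n)%N ->
  @isotropic p n S -> \dim S = (n - k)%N ->
  @density R p rho ->
  optr (opmul (@Pi0 R p n k S) (@tensn R p n rho))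
  = @cwe R p n (@sperp p n S) (@Wigner R p rho).
Proof.
move=> pr podd _ _ _ dS _.
exact: main.
Qed.
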